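(* Consider the miners' game with $n$ miners $s_1,\dots,s_n$, parameters $R>0$, $N>0$, unit prices $\lambda_1,\dots,\lambda_n>0$, where miner $s_i$ chooses $\mu_i\ge0$ and receives profit $P_i=\frac{\mu_i}{\sum_{j=1}^n\mu_j}RN-\lambda_i\mu_i$ (the fraction being $0$ if $\sum_j\mu_j=0$). Let $q$ be the number of miners with a nonzero strategy in a Nash equilibrium of this game. Then $q\ge 2$.
   Context: A Nash equilibrium is a profile $(\mu_1^*,\dots,\mu_n^* )$ with all $\mu_i^*\ge 0$ such that no miner $s_i$ can strictly increase $P_i$ by unilaterally changing $\mu_i^*$ to another value $\mu_i\ge0$. *)

(* Defs.v *)
From HB Require Import structures.
From mathcomp Require Import all_boot all_order all_algebra.
Set Implicit Arguments. Unset Strict Implicit. Unset Printing Implicit Defensive.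
Import Order.TTheory GRing.Theory Num.Theory.
Local Open Scope ring_scope.

Definition share (K : realFieldType) (n : nat) (mu : 'I_n -> K) (i : 'I_n) : K :=
  let S := \sum_(j < n) mu j in if S == 0 then 0 else mu i / S.

Definition profit (K : realFieldType) (n : nat) (R N : K) (lam : 'I_n -> K)
  (mu : 'I_n -> K) (i : 'I_n) : K :=
  share mu i * R * N - lam i * mu i.

Definition deviate (K : realFieldType) (n : nat) (mu : 'I_n -> K) (i : 'I_n) (x : K)
  : 'I_n -> K := fun j => if j == i then x else mu j.

Definition nash_equilibrium (K : realFieldType) (n : nat) (R N : K) (lam : 'I_n -> K)
  (mu : 'I_n -> K) : Prop :=
  (forall i, 0 <= mu i) /\
  (forall (i : 'I_n) (x : K), 0 <= x ->
     ~ (profit R N lam mu i < profit R N lam (deviate mu i x) i)).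

Definition num_active (K : realFieldType) (n : nat) (mu : 'I_n -> K) : nat :=
  #|[set i : 'I_n | mu i != 0]|.

(* Main.v *)
Require Import Defs.
From HB Require Import structures.
From mathcomp Require Import all_boot all_order all_algebra.
From mathcomp Require Import ring lra.
Import Order.TTheory GRing.Theory Num.Theory.
Local Open Scope ring_scope.

Lemma sum_single (K : realFieldType) (n : nat) (mu : 'I_n -> K) (i : 'I_n) :
  (forall j, j != i -> mu j = 0) -> \sum_(j < n) mu j = mu i.
Proof.
move=> H; rewrite (bigD1 i) //= big1 ?addr0 //.
Qed.

Lemma profit_single (K : realFieldType) (n : nat) (R N : K) (lam : 'I_n -> K)
  (mu : 'I_n -> K) (i : 'I_n) :
  (forall j, j != i -> mu j = 0) -> 0 < mu i ->
  profit R N lam mu i = R * N - lam i * mu i.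
Proof.
move=> H hp; rewrite /profit /share (@sum_single _ _ _ _ H) (gt_eqF hp) divff ?mul1r //.
by rewrite gt_eqF.
Qed.

Theorem corollary2 (K : realFieldType) (n : nat) (R N : K) (lam : 'I_n -> K)
  (mu : 'I_n -> K) :
  (0 < n)%N -> 0 < R -> 0 < N -> (forall i, 0 < lam i) ->
  nash_equilibrium R N lam mu ->
  (2 <= num_active mu)%N.
Proof.
move=> n0 R0 N0 lam0 [mu0 nash].
rewrite leqNgt; apply/negP => hlt.
have [i0 Hi0] : exists i0 : 'I_n, forall j, j != i0 -> mu j = 0.
  case: (set_0Vmem [set i : 'I_n | mu i != 0]) => [E|[i0 Hi0]].
    exists (Ordinal n0) => j _; apply/eqP; apply/negPn/negP => hj.
    have : j \in [set i : 'I_n | mu i != 0] by rewrite inE.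
    by rewrite E inE.
  exists i0 => j hj; apply/eqP; apply/negPn/negP => hmj.
  have hsub : [set i0; j] \subset [set i : 'I_n | mu i != 0].
    rewrite inE in Hi0; apply/subsetP => k; rewrite !inE; by case/orP => /eqP ->.
  have := subset_leq_card hsub; rewrite cards2 eq_sym hj /num_active.
  by move: hlt; rewrite /num_active; case: #|_| => [|[|]].
have dev_others : forall x j, j != i0 -> deviate mu i0 x j = 0.
  by move=> x j hj; rewrite /deviate (negbTE hj) Hi0.
have dev_self : forall x, deviate mu i0 x i0 = x by move=> x; rewrite /deviate eqxx.
have l0 := lam0 i0.
have RN : 0 < R * N by rewrite mulr_gt0.
have [hz|hp] := eqVneq (mu i0) 0.
  set x := R * N / (2 * lam i0).
  have xp : 0 < x by rewrite /x divr_gt0 // mulr_gt0.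
  apply: (nash i0 x (ltW xp)).
  rewrite (@profit_single _ _ _ _ _ _ _ (dev_others x)) ?dev_self //.
  rewrite /profit /share (@sum_single _ _ _ _ Hi0) hz eqxx mul0r mul0r mulr0 subr0.
  have -> : lam i0 * x = R * N / 2.
    rewrite /x; field; by rewrite gt_eqF.
  lra.
have mp : 0 < mu i0 by rewrite lt_def hp mu0.
apply: (nash i0 (mu i0 / 2)); first lra.
rewrite (@profit_single _ _ _ _ _ _ _ (dev_others _)) ?dev_self //; last lra.
rewrite (@profit_single _ _ _ _ _ _ _ Hi0) //.
have : 0 < lam i0 * mu i0 by rewrite mulr_gt0.
rewrite mulrA; lra.
Qed.
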